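(* Let $d,m_1,\dots,m_d\in\mathbb N$ and $N=m_1\cdots m_d$. (a) For product weights $\gamma_{\mathfrak u}=\prod_{j\in\mathfrak u}\gamma_j$ (with $\gamma_j\in[0,1]$) and arbitrary real coefficients $\mathcal A(\Gamma_{m_1,\dots,m_d})$, for every $\ell\in[d]$ we have $D^*_{N,\boldsymbol\gamma}(\Gamma_{m_1,\dots,m_d},\mathcal A(\Gamma_{m_1,\dots,m_d}))\ge\frac{\gamma_\ell}{4m_\ell}$. (b) With QMC coefficients, $D^*_N(\Gamma_{m_1,\dots,m_d})=1-\prod_{j=1}^d\left(1-\frac{1}{2m_j}\right)$. (c) With QMC coefficients and arbitrary weights $\gamma_{\mathfrak u}\in[0,1]$ ($\emptyset\ne\mathfrak u\subseteq[d]$), $D^*_{N,\boldsymbol\gamma}(\Gamma_{m_1,\dots,m_d})=\max_{\emptyset\ne\mathfrak u\subseteq[d]}\gamma_{\mathfrak u}\left(1-\prod_{j\in\mathfrak u}\left(1-\frac{1}{2m_j}\right)\right)$ and $D^*_{N,\boldsymbol\gamma}(\Gamma_{m_1,\dots,m_d})\le\max_{\emptyset\ne\mathfrak u\subseteq[d]}\gamma_{\mathfrak u}\sum_{j\in\mathfrak u}\frac{1}{2m_j}$.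
   Context: Write $[d]=\{1,\dots,d\}$. The centered regular grid is $\Gamma_{m_1,\dots,m_d}=\{(\frac{2\ell_1+1}{2m_1},\dots,\frac{2\ell_d+1}{2m_d}) : \ell_j\in\{0,\dots,m_j-1\}\}$. For an $N$-point set $\mathcal P_d\subset[0,1)^d$ with real coefficients $\mathcal A(\mathcal P_d)=\{a_{\boldsymbol x}:\boldsymbol x\in\mathcal P_d\}$, the local discrepancy is $\Delta_{\mathcal P_d,\mathcal A(\mathcal P_d)}(\boldsymbol\alpha)=\sum_{\boldsymbol x\in\mathcal P_d}a_{\boldsymbol x}\mathbf 1_{[\boldsymbol 0,\boldsymbol\alpha)}(\boldsymbol x)-\prod_{j=1}^d\alpha_j$ for $\boldsymbol\alpha\in[0,1]^d$, with $[\boldsymbol 0,\boldsymbol\alpha)=[0,\alpha_1)\times\cdots\times[0,\alpha_d)$. The $\boldsymbol\gamma$-weighted star discrepancy is $D^*_{N,\boldsymbol\gamma}(\mathcal P_d,\mathcal A(\mathcal P_d))=\sup_{\boldsymbol\alpha\in[0,1]^d}\max_{\emptyset\ne\mathfrak u\subseteq[d]}\gamma_{\mathfrak u}|\Delta_{\mathcal P_d,\mathcal A(\mathcal P_d)}((\boldsymbol\alpha_{\mathfrak u},\boldsymbol 1))|$, where $(\boldsymbol\alpha_{\mathfrak u},\boldsymbol 1)=(y_1,\dots,y_d)$ with $y_j=\alpha_j$ for $j\in\mathfrak u$ and $y_j=1$ otherwise. QMC coefficients means $a_{\boldsymbol x}=1/N$ for all $\boldsymbol x$; in that case one writes $D^*_{N,\boldsymbol\gamma}(\mathcal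 P_d)$. The (unweighted) star discrepancy with QMC coefficients is $D^*_N(\mathcal P_d)=\sup_{\boldsymbol\alpha\in[0,1]^d}|\Delta_{\mathcal P_d}(\boldsymbol\alpha)|$ (the case $\gamma_{[d]}=1$, $\gamma_{\mathfrak u}=0$ for $\mathfrak u\subsetneq[d]$). *)

(* Defs.v *)
From HB Require Import structures.
From mathcomp Require Import all_boot all_order all_algebra.
From mathcomp Require Import classical_sets reals.
Set Implicit Arguments. Unset Strict Implicit. Unset Printing Implicit Defensive.
Import Order.TTheory GRing.Theory Num.Theory.
Local Open Scope ring_scope.
Local Open Scope classical_set_scope.

Definition grid_idx (d : nat) (m : 'I_d -> nat) : finType :=
  {dffun forall j : 'I_d, 'I_(m j)}.

Definition grid_pt (R : realType) (d : nat) (m : 'I_d -> nat)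
  (l : grid_idx m) (j : 'I_d) : R :=
  ((2 * l j + 1)%:R / (2 * m j)%:R).

Definition local_disc (R : realType) (d : nat) (m : 'I_d -> nat)
  (a : grid_idx m -> R) (alpha : 'I_d -> R) : R :=
  \sum_(l : grid_idx m | [forall j, (0 <= grid_pt R l j) && (grid_pt R l j < alpha j)]) a l
  - \prod_(j < d) alpha j.

Definition alpha_u (R : realType) (d : nat) (u : {set 'I_d}) (alpha : 'I_d -> R)
  : 'I_d -> R := fun j => if j \in u then alpha j else 1.

Definition in_unit_cube (R : realType) (d : nat) (alpha : 'I_d -> R) : Prop :=
  forall j, 0 <= alpha j <= 1.

Definition wstar_disc (R : realType) (d : nat) (m : 'I_d -> nat)
  (gamma : {set 'I_d} -> R) (a : grid_idx m -> R) : R :=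
  sup [set r : R | exists alpha : 'I_d -> R, in_unit_cube alpha /\
         exists u : {set 'I_d}, u != finset.set0 /\
           r = gamma u * `|local_disc a (alpha_u u alpha)| ].

Definition star_disc (R : realType) (d : nat) (m : 'I_d -> nat)
  (a : grid_idx m -> R) : R :=
  sup [set r : R | exists alpha : 'I_d -> R, in_unit_cube alpha /\
         r = `|local_disc a alpha| ].

Definition qmc (R : realType) (d : nat) (m : 'I_d -> nat) : grid_idx m -> R :=
  fun _ => ((\prod_(j < d) m j)%:R)^-1.

Definition prod_weights (R : realType) (d : nat) (g : 'I_d -> R) : {set 'I_d} -> R :=
  fun u => \prod_(j in u) g j.

(* Main.v *)
Require Import Defs.
From HB Require Import structures.
From mathcomp Require Import all_boot all_order all_algebra.
From mathcomp Require Import boolp classical_sets reals.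
From mathcomp Require Import ring lra zify.
Import Order.TTheory GRing.Theory Num.Theory.
Local Open Scope ring_scope.

Lemma downK (P : nat -> bool) : (forall i i', (i' <= i)%N -> P i -> P i') ->
  forall n, exists K, (K <= n)%N /\ forall i, (i < n)%N -> P i = (i < K)%N.
Proof.
move=> hP; elim=> [|n [K [Kn HK]]]; first by exists 0%N.
have [Kn'|] := ltnP K n.
  exists K; split; first by lia.
  move=> i; rewrite ltnS leq_eqVlt => /orP[/eqP->|/HK //].
  have := HK _ Kn'; rewrite ltnn => hk.
  rewrite ltnNge (ltnW Kn') /=; apply/negbTE/negP => Pn; move: hk; rewrite (hP n K) //; lia.
move=> nK; have eK : K = n by lia.
subst K; case Pn: (P n).
  exists n.+1; split=> // i; rewrite ltnS leq_eqVlt => /orP[/eqP->|hi]; first by rewrite Pn; lia.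
  by rewrite HK // hi; symmetry; apply/idP; lia.
exists n; split=> // i; rewrite ltnS leq_eqVlt => /orP[/eqP->|/HK //].
by rewrite Pn ltnn.
Qed.

Lemma card_ltK (m K : nat) : (K <= m)%N -> #|[pred i : 'I_m | (i < K)%N]| = K.
Proof.
move=> Km; rewrite -sum1_card.
have h := big_ord_narrow_cond (op := addn) (idx := 0%N) (P := xpredT) (F := fun _ => 1%N) Km.
rewrite /= in h.
transitivity (\sum_(i < m | true && (i < K)%N) 1)%N; first by apply: eq_bigl.
by rewrite h sum1_card card_ord.
Qed.

Section Coord.
Variable R : realType.

Lemma pt_eq (k m : nat) : (0 < m)%N ->
  (2 * k + 1)%:R / (2 * m)%:R = k%:R / m%:R + ((2 * m)%:R)^-1 :> R.
Proof.
move=> m0; have hm : (0 : R) < m%:R by rewrite ltr0n.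
rewrite !natrD ?addr0; field.
by rewrite (gt_eqF hm) gt_eqF //; lra.
Qed.

Definition cS (m : nat) (t : R) := [pred i : 'I_m | (2 * i + 1)%:R / (2 * m)%:R < t].
Definition cb (m : nat) (t : R) : R := #|cS m t|%:R / m%:R.

Lemma cb_spec (m : nat) (t : R) : (0 < m)%N -> 0 <= t <= 1 ->
  [/\ 0 <= cb m t <= 1, cb m t - t <= ((2 * m)%:R)^-1,
      t - cb m t <= ((2 * m)%:R)^-1 &
      (1 - ((2 * m)%:R)^-1 < t -> cb m t = 1)].
Proof.
move=> m0 /andP[t0 t1].
have hm : (0 : R) < m%:R by rewrite ltr0n.
have dpos : (0 : R) < ((2 * m)%:R)^-1 by rewrite invr_gt0 ltr0n; lia.
have e2 : ((2 * m)%:R)^-1 = (m%:R)^-1 / 2 :> R.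
  by rewrite natrM invfM mulrC.
pose P := fun i : nat => (2 * i + 1)%:R / (2 * m)%:R < t.
have hP : forall i i', (i' <= i)%N -> P i -> P i'.
  move=> i i' ii; rewrite /P !pt_eq //; apply: le_lt_trans.
  by rewrite lerD2r ler_pM2r ?invr_gt0 // ler_nat.
have [K [Km HK]] := @downK P hP m.
have cK : #|cS m t| = K.
  rewrite -(@card_ltK m K Km); apply: eq_card => i; rewrite !inE.
  exact: (HK i (ltn_ord i)).
have bK : cb m t = K%:R / m%:R by rewrite /cb cK.
have b01 : 0 <= cb m t <= 1.
  rewrite bK divr_ge0 ?ler0n //= ler_pdivrMr // mul1r ler_nat //.
have hi : (0 < K)%N -> cb m t - t <= ((2 * m)%:R)^-1.
  case: K Km HK cK bK => // K Km HK _ -> _.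
  have := HK K; rewrite ltnSn => /(_ Km); rewrite -/(P K) /P pt_eq // => h.
  have -> : K.+1%:R / m%:R = K%:R / m%:R + (m%:R)^-1 :> R.
    by rewrite -natr1 mulrDl mul1r.
  lra.
have hj : (K < m)%N -> t - cb m t <= ((2 * m)%:R)^-1.
  move=> Km'; have := HK K Km'; rewrite ltnn => /negbT.
  rewrite -/(P K) /P pt_eq // -leNgt bK; lra.
split=> //.
- case: (posnP K) => [K0|]; last exact: hi.
  rewrite bK K0 mul0r; lra.
- have [Km'|] := ltnP K m; first exact: hj.
  move=> mK; rewrite bK; have -> : K = m by lia.
  rewrite divff ?(gt_eqF hm) //; lra.
- move=> ht; rewrite bK; have [Km'|mK] := ltnP K m.
    have := HK K Km'; rewrite ltnn.
    have -> // : P K.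
    apply: (hP m.-1); first lia.
    rewrite /P pt_eq //.
    have -> : m.-1%:R / m%:R = 1 - (m%:R)^-1 :> R.
      have em : m.-1%:R = m%:R - 1 :> R by rewrite -{2}(prednK m0) -natr1 addrK.
      by rewrite em mulrBl mul1r divff ?(gt_eqF hm).
    lra.
  have -> : K = m by lia.
  by rewrite divff ?(gt_eqF hm).
Qed.
End Coord.



Lemma foldr_prod (T : Type) (s : seq T) (f : T -> nat) :
  foldr muln 1%N [seq f x | x <- s] = (\prod_(x <- s) f x)%N.
Proof. by elim: s => [|x s IH]; rewrite ?big_nil ?big_cons //= IH. Qed.

Lemma disc_qmc (R : realType) (d : nat) (m : 'I_d -> nat) (alpha : 'I_d -> R) :
  (forall j, (0 < m j)%N) ->
  local_disc (@qmc R d m) alpha = \prod_j cb R (m j) (alpha j) - \prod_j alpha j.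
Proof.
move=> hm; rewrite /local_disc /qmc sumr_const; congr (_ - _).
have -> : #|[pred l : grid_idx m | [forall j, (0 <= grid_pt R l j) && (grid_pt R l j < alpha j)]]|
   = #|(family (fun j => cS R (m j) (alpha j)) : simpl_pred (grid_idx m))|.
  apply: eq_card => l; rewrite !inE; apply/forallP/familyP => h j.
    by have /andP[_ ?] := h j; rewrite inE.
  have := h j; rewrite inE => ->; rewrite andbT /grid_pt divr_ge0 ?ler0n //.
rewrite card_family /image_mem foldr_prod.
have e : forall (x : R) n, x *+ n = n%:R * x by move=> x n; rewrite mulr_natl.
rewrite e natr_prod big_enum natr_prod -prodfV -big_split /=.
by apply: eq_bigr => j _.
Qed.



Section Ineq.
Variable R : realType.

Lemma step1 (F E C f e dl : R) : 0 <= F <= 1 -> 0 <= E <= 1 -> 0 <= C <= 1 ->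
  0 <= f <= 1 -> 0 <= e <= 1 -> 0 <= dl <= 1 -> f - e <= dl -> F - E <= 1 - C ->
  F * f - E * e <= 1 - C * (1 - dl).
Proof.
move=> /andP[F0 F1] /andP[E0 E1] /andP[C0 C1] /andP[f0 f1] /andP[e0 e1] /andP[d0 d1] fe FE.
have h1 : E * (f - dl) <= E * e by rewrite ler_wpM2l //; lra.
have [fd|df] := lerP f dl.
  have : F * f <= f by rewrite ler_piMl.
  have : 0 <= E * e by rewrite mulr_ge0.
  nra.
have : (f - dl) * (F - E) <= (f - dl) * (1 - C) by rewrite ler_wpM2l //; lra.
have : (1 - dl) * (1 - C) >= (f - dl) * (1 - C) by rewrite ler_wpM2r //; lra.
have : dl * F <= dl by rewrite ler_piMr.
nra.
Qed.

Lemma prod01 n (f : 'I_n -> R) : (forall j, 0 <= f j <= 1) -> 0 <= \prod_j f j <= 1.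
Proof.
move=> h; rewrite prodr_ge0 ?prodr_ile1 // => j; by case/andP: (h j).
Qed.

Lemma L1 n (f e dl : 'I_n -> R) : (forall j, 0 <= f j <= 1) -> (forall j, 0 <= e j <= 1) ->
  (forall j, 0 <= dl j <= 1) -> (forall j, f j - e j <= dl j) ->
  \prod_j f j - \prod_j e j <= 1 - \prod_j (1 - dl j).
Proof.
elim: n f e dl => [|n IH] f e dl hf he hd hfe.
  by rewrite !big_ord0 subrr.
rewrite !big_ord_recr /=.
apply: step1.
- by apply: prod01 => j.
- by apply: prod01 => j.
- apply: prod01 => j; have := hd (widen_ord (leqnSn n) j); move=> /andP[? ?]; apply/andP; split; lra.
- exact: hf.
- exact: he.
- exact: hd.
- exact: hfe.
- exact: IH.
Qed.

Lemma L2 n (f e : 'I_n -> R) (t : R) : (forall j, 0 <= e j <= f j) -> (forall j, f j <= 1) ->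
  (forall j, f j - e j <= t) -> \prod_j f j - \prod_j e j <= n%:R * t.
Proof.
elim: n f e => [|n IH] f e he hf hfe.
  by rewrite !big_ord0 subrr mul0r.
rewrite !big_ord_recr /=.
set F := \prod_(i < n) f (widen_ord _ i); set E := \prod_(i < n) e (widen_ord _ i).
have hFE : F - E <= n%:R * t by apply: IH.
have E0 : 0 <= E by apply: prodr_ge0 => j _; case/andP: (he (widen_ord (leqnSn n) j)).
have EF : E <= F.
  apply: ler_prod => j _; exact: he.
have F1 : F <= 1.
  apply: prodr_ile1 => j _; have := he (widen_ord (leqnSn n) j); have := hf (widen_ord (leqnSn n) j).
  move=> a /andP[b c]; rewrite (le_trans b c) //.
have := he ord_max; have := hf ord_max; have := hfe ord_max.
set a := f ord_max; set b := e ord_max => h1 h2 /andP[h3 h4].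
have : (F - E) * b <= F - E by rewrite ler_piMr ?subr_ge0 //; lra.
have : F * (a - b) <= a - b by rewrite ler_piMl //; lra.
rewrite -natr1; nra.
Qed.

Lemma L3 (I : finType) (u : {set I}) (dl : I -> R) : (forall j, 0 <= dl j <= 1) ->
  1 - \prod_(j in u) (1 - dl j) <= \sum_(j in u) dl j.
Proof.
move=> hd.
pose K := fun x y : R => (0 <= x <= 1) && (1 - x <= y).
suff : K (\prod_(j in u) (1 - dl j)) (\sum_(j in u) dl j) by case/andP.
apply: (big_ind2 K); first by rewrite /K; apply/andP; split; lra.
  move=> x1 y1 x2 y2 /andP[/andP[a b] c] /andP[/andP[a' b'] c'].
  rewrite /K mulr_ge0 //=; apply/andP; split; first by rewrite mulr_ile1.
  have : x1 * (1 - x2) <= 1 - x2 by rewrite ler_piMl //; lra.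
  lra.
move=> j _; have := hd j; rewrite /K => /andP[a b]; apply/andP; split; [apply/andP; split|]; lra.
Qed.
End Ineq.



Section Main.
Variables (R : realType) (d : nat) (m : 'I_d -> nat).
Hypothesis hm : forall j, (0 < m j)%N.

Let dl (j : 'I_d) : R := ((2 * m j)%:R)^-1.

Lemma dl01 j : 0 <= dl j <= 1.
Proof.
rewrite /dl invr_ge0 ler0n /= invf_le1 ?ler1n ?ltr0n; have := hm j; lia.
Qed.

Lemma cb1 j : cb R (m j) 1 = 1.
Proof.
have h01 : (0 <= (1:R) <= 1)%R by apply/andP; split; lra.
have [_ _ _ ->] // := @cb_spec R (m j) 1 (hm j) h01.
have := dl01 j; rewrite /dl; have : 0 < dl j by rewrite /dl invr_gt0 ltr0n; have := hm j; lia.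
rewrite /dl; lra.
Qed.


Lemma cube_u (u : {set 'I_d}) (alpha : 'I_d -> R) :
  in_unit_cube alpha -> in_unit_cube (alpha_u u alpha).
Proof.
move=> h j; rewrite /alpha_u; case: ifP => _; first exact: h.
by apply/andP; split; lra.
Qed.

Let dlu (u : {set 'I_d}) (j : 'I_d) : R := if j \in u then dl j else 0.

Lemma dlu01 u j : 0 <= dlu u j <= 1.
Proof. rewrite /dlu; case: ifP => _; first exact: dl01. by apply/andP; split; lra. Qed.

Lemma coord_bd j (s : R) : 0 <= s <= 1 -> `|cb R (m j) s - s| <= dl j.
Proof.
move=> hs; have [_ h1 h2 _] := @cb_spec R (m j) s (hm j) hs.
rewrite ler_norml; rewrite /dl; apply/andP; split; lra.
Qed.

Lemma coord_u u (alpha : 'I_d -> R) j : in_unit_cube alpha ->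
  `|cb R (m j) (alpha_u u alpha j) - alpha_u u alpha j| <= dlu u j.
Proof.
move=> h; rewrite /alpha_u /dlu; case: ifP => _; first exact: coord_bd.
by rewrite cb1 subrr normr0.
Qed.

Lemma prod_dlu u : \prod_j (1 - dlu u j) = \prod_(j in u) (1 - dl j).
Proof.
rewrite [RHS]big_mkcond /=; apply: eq_bigr => j _; rewrite /dlu.
by case: ifP => _ //; rewrite subr0.
Qed.

Lemma disc_ub (alpha : 'I_d -> R) (de : 'I_d -> R) : in_unit_cube alpha ->
  (forall j, 0 <= de j <= 1) -> (forall j, `|cb R (m j) (alpha j) - alpha j| <= de j) ->
  `|local_disc (@qmc R d m) alpha| <= 1 - \prod_j (1 - de j).
Proof.
move=> ha hd hc; rewrite disc_qmc // ler_norml; apply/andP; split.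
  rewrite lerNl opprB; apply: L1 => // j.
  - have [] := @cb_spec R (m j) (alpha j) (hm j) (ha j) => //.
  - have := hc j; rewrite ler_norml => /andP[a b]; lra.
apply: L1 => // j.
- have [] := @cb_spec R (m j) (alpha j) (hm j) (ha j) => //.
- have := hc j; rewrite ler_norml => /andP[a b]; lra.
Qed.


Lemma dl_gt0 j : 0 < dl j.
Proof. rewrite /dl invr_gt0 ltr0n; have := hm j; lia. Qed.

Lemma approx (u : {set 'I_d}) (e : R) : 0 < e -> exists alpha, in_unit_cube alpha /\
  1 - \prod_(j in u) (1 - dl j) - e <= `|local_disc (@qmc R d m) (alpha_u u alpha)|.
Proof.
move=> e0.
pose M := (\sum_j m j).+1%N.
pose t := Num.min (e / d.+1%:R) ((2 * M)%:R)^-1.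
have t0 : 0 < t.
  rewrite lt_min divr_gt0 ?ltr0n //= invr_gt0 ltr0n; lia.
have tdl : forall j, t <= dl j.
  move=> j; rewrite ge_min; apply/orP; right.
  rewrite /dl lef_pV2 ?posrE ?ltr0n ?ler_nat; last 2 first.
  - lia.
  - have := hm j; lia.
  rewrite /M; apply: leq_mul => //; apply: leqW; rewrite (bigD1 j) //=; exact: leq_addr.
have tde : d%:R * t <= e.
  have : t <= e / d.+1%:R by rewrite ge_min lexx.
  have hd : (0 : R) < d.+1%:R by rewrite ltr0n.
  rewrite ler_pdivlMr // => h.
  have : (0:R) <= d%:R by rewrite ler0n.
  rewrite -natr1 in h; nra.
pose alpha := fun j => 1 - dl j + t.
have ha : in_unit_cube alpha.
  move=> j; have := dl01 j; have := tdl j; rewrite /alpha => ? /andP[? ?].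
  apply/andP; split; lra.
exists alpha; split => //.
have cbu : forall j, cb R (m j) (alpha_u u alpha j) = 1.
  move=> j; have [_ _ _ ->] // := @cb_spec R (m j) _ (hm j) (cube_u u alpha ha j).
  have := dl_gt0 j; rewrite /alpha_u /alpha /dl; case: ifP => _; lra.
rewrite disc_qmc //.
have -> : \prod_j cb R (m j) (alpha_u u alpha j) = 1 by apply: big1 => j _; exact: cbu.
have hL := @L2 R d (alpha_u u alpha) (fun j => 1 - dlu u j) t.
have := hL.
rewrite prod_dlu.
move=> /(_ _ _ _) h.
have h' : \prod_j alpha_u u alpha j - \prod_(j in u) (1 - dl j) <= d%:R * t.
  apply: h => j.
  - have := dlu01 u j; have := tdl j; rewrite /alpha_u /dlu /alpha.
    case: ifP => _ ? /andP[? ?]; apply/andP; split; lra.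
  - by have /andP[] := cube_u u alpha ha j.
  - have := tdl j; rewrite /alpha_u /dlu /alpha; case: ifP => _ ?; lra.
have := ler_norm (1 - \prod_j alpha_u u alpha j).
lra.
Qed.

End Main.



Theorem proposition1 (R : realType) (d : nat) (m : 'I_d -> nat)
  (hd : (0 < d)%N) (hm : forall j, (0 < m j)%N) :
  (* (a) *)
  (forall (g : 'I_d -> R), (forall j, 0 <= g j <= 1) ->
   forall (a : grid_idx m -> R) (l : 'I_d),
     g l / (4 * m l)%:R <= wstar_disc (prod_weights g) a) /\
  (* (b) *)
  (star_disc (@qmc R d m) =
     1 - \prod_(j < d) (1 - ((2 * m j)%:R)^-1)) /\
  (* (c) *)
  (forall gamma : {set 'I_d} -> R,
     (forall u : {set 'I_d}, u != finset.set0 -> 0 <= gamma u <= 1) ->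
     wstar_disc gamma (@qmc R d m) =
       \big[Num.max/0]_(u : {set 'I_d} | u != finset.set0)
          (gamma u * (1 - \prod_(j in u) (1 - ((2 * m j)%:R)^-1))) /\
     wstar_disc gamma (@qmc R d m) <=
       \big[Num.max/0]_(u : {set 'I_d} | u != finset.set0)
          (gamma u * \sum_(j in u) ((2 * m j)%:R)^-1)).
Proof.
have j0 : 'I_d := Ordinal hd.
have cube0 : in_unit_cube (fun _ : 'I_d => (0 : R)).
  by move=> j; apply/andP; split; lra.
split.
  move=> g hg a l; rewrite /wstar_disc.
  set E := (X in sup X).
  have hub : has_ubound E.
    exists (\sum_l' `|a l'| + 1) => r [alpha [ha [u [_ ->]]]].
    have g01 : 0 <= prod_weights g u <= 1.
      rewrite /prod_weights prodr_ge0 ?prodr_ile1 // => j _; by case/andP: (hg j).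
    have hd1 : `|local_disc a (alpha_u u alpha)| <= \sum_l' `|a l'| + 1.
      rewrite /local_disc; apply: le_trans (ler_normB _ _) _; apply: lerD.
        apply: le_trans (ler_norm_sum _ _ _) _.
        rewrite [leRHS](bigID [pred l' | [forall j, (0 <= grid_pt R l' j) && (grid_pt R l' j < alpha_u u alpha j)]]) /=.
        by rewrite lerDl sumr_ge0.
      have /andP[h0 h1] := @prod01 R d (alpha_u u alpha) (@cube_u R d u alpha ha).
      by rewrite ger0_norm.
    case/andP: g01 => g0 g1; apply: le_trans hd1; exact: ler_piMl.
  have hel : E (g l * ((2 * m l)%:R)^-1).
    exists (fun _ => ((2 * m l)%:R)^-1); split.
      by move=> j; exact: (@dl01 R d m hm l).
    exists [set l]; split; first by apply/finset.set0Pn; exists l; rewrite finset.in_set1.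
    rewrite /prod_weights big_set1; congr (_ * _).
    rewrite /local_disc big_pred0 => [|l']; last first.
      apply/negbTE/negP => /forallP /(_ l) /andP[_].
      rewrite /alpha_u finset.in_set1 eqxx /grid_pt pt_eq //.
      have : (0 : R) <= (l' l)%:R / (m l)%:R by rewrite divr_ge0 ?ler0n.
      lra.
    rewrite (bigD1 l) //= big1 => [|j /negbTE jl]; last by rewrite /alpha_u finset.in_set1 jl.
    rewrite /alpha_u finset.in_set1 eqxx mulr1 sub0r normrN ger0_norm // invr_ge0 ler0n //.
  apply: le_trans (ub_le_sup hub hel).
  have hm' : (0 : R) < (m l)%:R by rewrite ltr0n.
  case/andP: (hg l) => g0 g1.
  rewrite ler_wpM2l // !natrM lef_pV2 ?posrE ?mulr_gt0 //; nra.
have dlE : forall u : {set 'I_d}, \prod_j (1 - (if j \in u then ((2 * m j)%:R)^-1 else 0))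
    = \prod_(j in u) (1 - ((2 * m j)%:R)^-1) :> R.
  move=> u; rewrite [RHS]big_mkcond /=; apply: eq_bigr => j _.
  by case: ifP => _ //; rewrite subr0.
split.
  rewrite /star_disc; set E := (X in sup X).
  have ub : forall r, E r -> r <= 1 - \prod_j (1 - ((2 * m j)%:R)^-1).
    move=> r [alpha [ha ->]]; apply: (@disc_ub R d m hm) => // j.
      exact: (@dl01 R d m hm j).
    exact: (@coord_bd R d m hm j _ (ha j)).
  have hub : has_ubound E by exists (1 - \prod_j (1 - ((2 * m j)%:R)^-1)).
  apply/le_anti/andP; split.
    apply: ge_sup => //; exists `|local_disc (@qmc R d m) (fun _ => 0)|.
    by exists (fun _ => 0); split.
  apply/ler_addgt0Pr => e e0.
  have [alpha [ha h]] := @approx R d m hm (finset.setT : {set 'I_d}) e e0.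
  have eu : alpha_u (finset.setT : {set 'I_d}) alpha = alpha.
    by apply/funext => j; rewrite /alpha_u finset.in_setT.
  rewrite eu /= in h.
  have hp : \prod_(j in (finset.setT : {set 'I_d})) (1 - ((2 * m j)%:R)^-1)
      = \prod_j (1 - ((2 * m j)%:R)^-1) :> R.
    by apply: eq_bigl => j; rewrite finset.in_setT.
  rewrite hp in h.
  have hE : E `|local_disc (@qmc R d m) alpha| by exists alpha.
  have := ub_le_sup hub hE.
  lra.
move=> gamma hg.
have bnd : forall u, u != finset.set0 -> forall alpha, in_unit_cube alpha ->
    gamma u * `|local_disc (@qmc R d m) (alpha_u u alpha)|
      <= gamma u * (1 - \prod_(j in u) (1 - ((2 * m j)%:R)^-1)).
  move=> u hu alpha ha; have /andP[g0 g1] := hg u hu.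
  rewrite ler_wpM2l // -dlE.
  apply: (@disc_ub R d m hm (alpha_u u alpha)
     (fun j => if j \in u then ((2 * m j)%:R)^-1 else 0) (@cube_u R d u alpha ha)).
    exact: (@dlu01 R d m hm u).
  move=> j; exact: (@coord_u R d m hm u alpha j ha).
rewrite /wstar_disc; set E := (X in sup X).
have ub : forall r, E r -> r <= \big[Num.max/0]_(u : {set 'I_d} | u != finset.set0)
          (gamma u * (1 - \prod_(j in u) (1 - ((2 * m j)%:R)^-1))).
  move=> r [alpha [ha [u [hu ->]]]].
  apply: (@bigmax_sup _ _ _ _ u); [exact: hu | exact: bnd].
have hub : has_ubound E by eexists; exact: ub.
have hu0 : [set j0]%SET != finset.set0 by apply/finset.set0Pn; exists j0; rewrite finset.in_set1.
have hE0 : E (gamma [set j0]%SET * `|local_disc (@qmc R d m) (alpha_u [set j0]%SET (fun _ => 0))|).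
  by exists (fun _ => 0); split => //; exists [set j0]%SET.
have heq : sup E = \big[Num.max/0]_(u : {set 'I_d} | u != finset.set0)
          (gamma u * (1 - \prod_(j in u) (1 - ((2 * m j)%:R)^-1))).
  apply/le_anti/andP; split.
    by apply: ge_sup => //; eexists; exact: hE0.
  apply: bigmax_le.
    apply: le_trans (ub_le_sup hub hE0).
    by have /andP[g0 _] := hg _ hu0; rewrite mulr_ge0.
  move=> u hu; have /andP[g0 g1] := hg u hu.
  apply/ler_addgt0Pr => e e0.
  have [alpha [ha h]] := @approx R d m hm u e e0.
  rewrite /= in h.
  have hE : E (gamma u * `|local_disc (@qmc R d m) (alpha_u u alpha)|).
    by exists alpha; split => //; exists u.
  have := ub_le_sup hub hE.
  have := ler_wpM2l g0 h.
  have : gamma u * e <= e by rewrite ler_piMl // ltW.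
  lra.
split => //.
rewrite heq; apply: le_bigmax2 => u hu; have /andP[g0 g1] := hg u hu.
rewrite ler_wpM2l //.
exact: (@L3 R _ u (fun j => ((2 * m j)%:R)^-1) (fun j => @dl01 R d m hm j)).
Qed.
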